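(* Let $(V,\langle\cdot\,,\cdot\rangle_V)$ be an admissible $\mathrm{Cl}_{r,s}$-module with $s>0$, and let $J_{z_k}$, $k=1,\ldots,r+s$, be the representations of the orthonormal generators $z_1,\ldots,z_{r+s}$ of $\mathrm{Cl}_{r,s}$. Then: (1) the scalar product space $(V,\langle\cdot\,,\cdot\rangle_V)$ is neutral, i.e. the maximal dimensions of subspaces on which the restriction of $\langle\cdot\,,\cdot\rangle_V$ is positive definite, respectively negative definite, coincide; in particular $\dim V$ is even; (2) if $W$ is an admissible sub-module of a $\mathrm{Cl}_{r,s}$-module $(V,\langle\cdot\,,\cdot\rangle_V)$, then its orthogonal complement $W^\perp=\{v\in V:\langle w,v\rangle_V=0\ \forall w\in W\}$ is also an admissible sub-module. Hence an admissible $\mathrm{Cl}_{r,s}$-module $(V,\langle\cdot\,,\cdot\rangle_V)$ decomposes into admissible sub-modules.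
   Context: A scalar product is a real symmetric non-degenerate bilinear form. $\mathbb R^{r,s}$ is $\mathbb R^{r+s}$ with the scalar product whose quadratic form is $x_1^2+\dots+x_r^2-x_{r+1}^2-\dots-x_{r+s}^2$, and $\mathrm{Cl}_{r,s}$ is the Clifford algebra generated by $\mathbb R^{r,s}$ with relation $z^2=-\langle z,z\rangle\cdot1$; orthonormal generators $z_1,\ldots,z_{r+s}$ satisfy $\langle z_i,z_j\rangle=0$ ($i\neq j$), $\langle z_i,z_i\rangle=1$ for $i\le r$, $=-1$ for $i>r$. A $\mathrm{Cl}_{r,s}$-module is a real vector space $V$ with a representation $J\colon\mathrm{Cl}_{r,s}\to\mathrm{End}(V)$, so $J_z^2=-\langle z,z\rangle\mathrm{Id}_V$ for $z\in\mathbb R^{r,s}$. It is admissible if $V$ carries a scalar product $\langle\cdot\,,\cdot\rangle_V$ with $\langle J_zu,v\rangle_V=-\langle u,J_zv\rangle_V$ for all $z\in\mathbb R^{r,s}$, $u,v\in V$. An admissible sub-module of an admissible module $(V,\langle\cdot\,,\cdot\rangle_V)$ is a Clifford sub-module $W$ such that the restriction of $\langle\cdot\,,\cdot\rangle_V$ to $W$ is an admissible scalar product on $W$ (in particular non-degenerate). *)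

(* Defs.v *)
From HB Require Import structures.
From mathcomp Require Import all_boot all_order all_algebra.
From mathcomp Require Import reals.
Set Implicit Arguments. Unset Strict Implicit. Unset Printing Implicit Defensive.
Import Order.TTheory GRing.Theory Num.Theory.
Local Open Scope ring_scope.

(* V = 'rV[R]_n (row vectors); endomorphisms act on the right: v |-> v *m A. *)

Definition qf_rs {R : realType} (r s : nat) (z : 'rV[R]_(r + s)) : R :=
  \sum_(i < r + s) (if (i < r)%N then 1 else -1) * z 0 i ^+ 2.

Definition gen_rs {R : realType} (r s : nat) (k : 'I_(r + s)) : 'rV[R]_(r + s) :=
  delta_mx 0 k.

(* A Cl_{r,s}-module structure on 'rV_n: a linear map z |-> J_z with
   J_z^2 = - <z,z> Id (universal property of the Clifford algebra). *)
Definition cl_module {R : realType} (r s n : nat)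
  (J : {linear 'rV[R]_(r + s) -> 'M[R]_n}) : Prop :=
  forall z : 'rV[R]_(r + s), J z *m J z = - (qf_rs z) %:M.

Definition form {R : realType} (n : nat) (G : 'M[R]_n) (u v : 'rV[R]_n) : R :=
  (u *m G *m v^T) 0 0.

Definition scalar_product {R : realType} (n : nat) (G : 'M[R]_n) : Prop :=
  G^T = G /\ G \in unitmx.

Definition skew_for {R : realType} (r s n : nat)
  (J : {linear 'rV[R]_(r + s) -> 'M[R]_n}) (G : 'M[R]_n) : Prop :=
  forall (z : 'rV[R]_(r + s)) (u v : 'rV[R]_n),
    form G (u *m J z) v = - form G u (v *m J z).

Definition admissible {R : realType} (r s n : nat)
  (J : {linear 'rV[R]_(r + s) -> 'M[R]_n}) (G : 'M[R]_n) : Prop :=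
  cl_module J /\ scalar_product G /\ skew_for J G.

(* Subspaces of V are represented by the row space of a matrix W. *)
Definition posdef_on {R : realType} (n : nat) (G : 'M[R]_n) (U : 'M[R]_n) : Prop :=
  forall v : 'rV[R]_n, (v <= U)%MS -> v != 0 -> 0 < form G v v.
Definition negdef_on {R : realType} (n : nat) (G : 'M[R]_n) (U : 'M[R]_n) : Prop :=
  forall v : 'rV[R]_n, (v <= U)%MS -> v != 0 -> form G v v < 0.

Definition is_max_pos_dim {R : realType} (n : nat) (G : 'M[R]_n) (d : nat) : Prop :=
  (exists U, posdef_on G U /\ \rank U = d) /\
  (forall U, posdef_on G U -> (\rank U <= d)%N).
Definition is_max_neg_dim {R : realType} (n : nat) (G : 'M[R]_n) (d : nat) : Prop :=
  (exists U, negdef_on G U /\ \rank U = d) /\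
  (forall U, negdef_on G U -> (\rank U <= d)%N).

Definition neutral {R : realType} (n : nat) (G : 'M[R]_n) : Prop :=
  forall p q, is_max_pos_dim G p -> is_max_neg_dim G q -> p = q.

Definition cl_submodule {R : realType} (r s n : nat)
  (J : {linear 'rV[R]_(r + s) -> 'M[R]_n}) (W : 'M[R]_n) : Prop :=
  forall z : 'rV[R]_(r + s), (W *m J z <= W)%MS.

(* Admissible sub-module: Clifford sub-module on which the restriction of the
   scalar product is an admissible scalar product (symmetric -- automatic --,
   non-degenerate, and J-skew). *)
Definition admissible_submodule {R : realType} (r s n : nat)
  (J : {linear 'rV[R]_(r + s) -> 'M[R]_n}) (G : 'M[R]_n) (W : 'M[R]_n) : Prop :=
  cl_submodule J W /\
  (forall u v : 'rV[R]_n, (u <= W)%MS -> (v <= W)%MS -> form G u v = form G v u) /\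
  (forall w : 'rV[R]_n, (w <= W)%MS ->
     (forall w' : 'rV[R]_n, (w' <= W)%MS -> form G w w' = 0) -> w = 0) /\
  (forall (z : 'rV[R]_(r + s)) (u v : 'rV[R]_n), (u <= W)%MS -> (v <= W)%MS ->
     form G (u *m J z) v = - form G u (v *m J z)).

Definition is_orth_compl {R : realType} (n : nat) (G : 'M[R]_n) (W Wp : 'M[R]_n) : Prop :=
  forall v : 'rV[R]_n, (v <= Wp)%MS <-> (forall w : 'rV[R]_n, (w <= W)%MS -> form G w v = 0).

(* Main.v *)
Require Import Defs.
From HB Require Import structures.
From mathcomp Require Import all_boot all_order all_algebra.
From mathcomp Require Import reals.
From mathcomp Require Import lra.
Import Order.TTheory GRing.Theory Num.Theory.
Local Open Scope ring_scope.
Local Notation form := Defs.form.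
Lemma bil_ext (R : realType) n (M N : 'M[R]_n) :
  (forall u v : 'rV[R]_n, (u *m M *m v^T) 0 0 = (u *m N *m v^T) 0 0) -> M = N.
Proof.
move=> H; apply/matrixP=> i j.
have E : forall P : 'M[R]_n, ((delta_mx 0 i : 'rV[R]_n) *m P *m (delta_mx 0 j : 'rV[R]_n)^T) 0 0 = P i j.
  by move=> P; rewrite trmx_delta -colE -rowE !mxE.
by rewrite -E H E.
Qed.

Lemma form_sym (R : realType) n (G : 'M[R]_n) (u v : 'rV[R]_n) :
  G^T = G -> form G u v = form G v u.
Proof.
move=> HG; rewrite /form; transitivity ((u *m G *m v^T)^T 0 0); first by rewrite [in RHS]mxE.
by rewrite !trmx_mul trmxK HG mulmxA.
Qed.

Lemma form_delta (R : realType) n (G : 'M[R]_n) (w : 'rV[R]_n) j :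
  form G w (delta_mx 0 j) = (w *m G) 0 j.
Proof. by rewrite /form trmx_delta -colE !mxE. Qed.

Lemma formDr (R : realType) n (G : 'M[R]_n) (u a b : 'rV[R]_n) :
  form G u (a + b) = form G u a + form G u b.
Proof. by rewrite /form linearD mulmxDr mxE. Qed.

Lemma form0l (R : realType) n (G : 'M[R]_n) (u : 'rV[R]_n) :
  form G 0 u = 0.
Proof. by rewrite /form !mul0mx mxE. Qed.

Theorem proposition2p1 (R : realType) (r s n : nat)
  (J : {linear 'rV[R]_(r + s) -> 'M[R]_n}) (G : 'M[R]_n) :
  (0 < s)%N -> admissible J G ->
  (neutral G /\ ~~ odd n) /\
  (forall W Wp : 'M[R]_n, admissible_submodule J G W -> is_orth_compl G W Wp ->
     admissible_submodule J G Wp /\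
     (W + Wp == (1%:M : 'M[R]_n))%MS /\ (W :&: Wp == (0 : 'M[R]_n))%MS).
Proof.
move=> s0 [Hcl [[HGt HGu] Hsk]].
have Hsym : forall u v, form G u v = form G v u by move=> u v; apply: form_sym.
have lrs : (r < r + s)%N by rewrite -{1}(addn0 r) ltn_add2l.
pose k : 'I_(r + s) := Ordinal lrs.
pose Jz := J (gen_rs k).
have HJ2 : Jz *m Jz = 1%:M.
  rewrite /Jz Hcl.
  have -> : qf_rs (gen_rs (R:=R) k) = -1 :> R.
    rewrite /qf_rs (bigD1 k) //= big1 => [|i /negbTE ik].
      by rewrite /gen_rs mxE !eqxx /= ltnn expr1n mulr1 addr0.
    by rewrite /gen_rs mxE ik andbF expr2 mulr0 mulr0.
  by apply/matrixP=> i j; rewrite !mxE; case: (i == j); rewrite /= ?opprK ?mulr1n ?mulr0n ?oppr0.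
have HJG : Jz *m G = - (G *m Jz^T).
  apply: bil_ext => u v.
  have := Hsk (gen_rs k) u v; rewrite /form trmx_mul !mulmxA => ->.
  by rewrite mulmxN mulNmx [RHS]mxE !mulmxA.
have HJGJ : Jz *m G *m Jz^T = - G.
  by rewrite HJG mulNmx -mulmxA -trmx_mul HJ2 trmx1 mulmx1.
have HJu : Jz \in unitmx by case: (mulmx1_unit HJ2).
have Hrf : row_free Jz by rewrite row_free_unit.
have key : forall w, form G (w *m Jz) (w *m Jz) = - form G w w.
  by move=> w; rewrite Hsk -mulmxA HJ2 mulmx1.
split.
  split.
    move=> p q [[U [HU rU]] Hp] [[V [HV rV]] Hq].
    apply/eqP; rewrite eqn_leq; apply/andP; split.
      rewrite -rU -(mxrankMfree U Hrf); apply: Hq => v /submxP [D ->] Hv.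
      rewrite mulmxA key oppr_lt0; apply: HU; first exact: submxMl.
      by apply: contraNneq Hv => E; rewrite mulmxA E mul0mx.
    rewrite -rV -(mxrankMfree V Hrf); apply: Hp => v /submxP [D ->] Hv.
    rewrite mulmxA key oppr_gt0; apply: HV; first exact: submxMl.
    by apply: contraNneq Hv => E; rewrite mulmxA E mul0mx.
  apply/negP => Hn.
  have := congr1 determinant HJGJ.
  rewrite !det_mulmx det_tr -scaleN1r -mul_scalar_mx det_mulmx det_scalar.
  have H1 : \det Jz * \det Jz = 1 by rewrite -det_mulmx HJ2 det1.
  rewrite -signr_odd Hn expr1 mulrAC H1 mul1r => E.
  move: HGu; rewrite unitmxE unitfE => /negP; apply; apply/eqP; lra.
move=> W Wp [HWc [HWs [HWn HWk]]] Hor.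
pose K := kermx (G *m W^T).
have HK : forall v : 'rV[R]_n, (v <= Wp)%MS <-> (v <= K)%MS.
  move=> v; rewrite Hor sub_kermx; split.
    move=> H; apply/eqP/matrixP => i j.
    transitivity ((v *m (G *m W^T))^T j i); first by rewrite [RHS]mxE.
    rewrite !trmx_mul trmxK HGt (ord1 i).
    rewrite [RHS]mxE.
    have := H _ (row_sub j W); rewrite /form -!row_mul mxE => ->.
    by [].
  move=> /eqP H w /submxP [D ->]; rewrite /form.
  have E : W *m (G *m v^T) = (v *m (G *m W^T))^T.
    by rewrite !trmx_mul trmxK HGt mulmxA.
  by rewrite -!mulmxA E H trmx0 mulmx0 mxE.
have WpK : (Wp <= K)%MS by apply/row_subP => i; apply/HK; exact: row_sub.
have KWp : (K <= Wp)%MS by apply/row_subP => i; apply/HK; exact: row_sub.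
have rWp : \rank Wp = (n - \rank W)%N.
  have e : \rank K = (n - \rank W)%N.
    rewrite mxrank_ker -[\rank (G *m W^T)]mxrank_tr trmx_mul HGt trmxK.
    by rewrite mxrankMfree // row_free_unit.
  by apply/eqP; rewrite eqn_leq -e !mxrankS.
have Hcap : (W :&: Wp <= (0 : 'M[R]_n))%MS.
  apply/row_subP => i; rewrite submx0.
  have : (row i (W :&: Wp) <= W :&: Wp)%MS by exact: row_sub.
  rewrite sub_capmx => /andP [vW vWp]; apply/eqP; apply: HWn => // w' w'W.
  rewrite Hsym; move/Hor: vWp => H; exact: H.
have Hfull : (W + Wp == 1%:M)%MS.
  apply/andP; split; first exact: submx1.
  rewrite sub1mx /row_full.
  have r0 : \rank (W :&: Wp) = 0%N by have := mxrankS Hcap; rewrite mxrank0 leqn0 => /eqP.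
  have := mxrank_sum_cap W Wp; rewrite r0 addn0 rWp subnKC ?rank_leq_col // => ->.
  by [].
split; last by split => //; apply/andP; split => //; exact: sub0mx.
split; [|split; [|split]].
- move=> z; apply/row_subP => i; rewrite row_mul; apply/Hor => w wW.
  rewrite -[LHS]opprK -Hsk.
  move/Hor: (row_sub i Wp) => H.
  by rewrite H ?oppr0 //; apply: submx_trans (submxMr (J z) wW) (HWc z).
- by move=> u v _ _; apply: Hsym.
- move=> w wWp H.
  have HwG : w *m G = 0.
    apply/rowP => j; rewrite -form_delta.
    move/andP: Hfull => [_ H1].
    have : ((delta_mx 0 j : 'rV[R]_n) <= W + Wp)%MS by exact: submx_trans (submx1 _) H1.
    case/sub_addsmxP => [[a b] /= ->]; rewrite formDr.
    rewrite [form G w (b *m Wp)]H ?submxMl // addr0 Hsym.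
    move/Hor: wWp => H2; rewrite H2 ?submxMl //.
    by rewrite mxE.
  by rewrite -[w](mulmxK HGu) HwG mul0mx.
- by move=> z u v _ _; apply: Hsk.
Qed.
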